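(* Let $(X,d)$ be a compact metric space and $F:X\to 2^X$ a continuous set-valued map. Then the projection $\pi_0:\mathrm{Orb}_r(X)\to X$, $\pi_0((x_n))=x_0$, is an open map (with $\mathrm{Orb}_r(X)$ carrying the subspace topology of the product topology).
   Context: $2^X$ is the family of nonempty compact subsets of $X$. A set-valued map $F:X\to 2^X$ is upper semicontinuous if for every $x$ and open $U\supset F(x)$ there is a neighborhood $V$ of $x$ with $F(y)\subset U$ for $y\in V$; lower semicontinuous if for every $x$ and open $U$ with $F(x)\cap U\ne\emptyset$ there is a neighborhood $V$ of $x$ with $F(y)\cap U\neq\emptyset$ for $y\in V$; continuous if both. $\mathrm{Orb}_r(X)=\{(x_0,x_1,\dots)\in X^{\mathbb N}: x_{n+1}\in F(x_n)\ \forall n\}$. *)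

(* Defs.v *)
From HB Require Import structures.
From mathcomp Require Import all_boot all_order all_algebra.
From mathcomp Require Import all_classical all_reals all_analysis.
Set Implicit Arguments. Unset Strict Implicit. Unset Printing Implicit Defensive.
Import Order.TTheory GRing.Theory Num.Theory.
Local Open Scope classical_set_scope.

Definition nonempty_compact_valued {T : topologicalType} (F : T -> set T) :=
  forall x, F x !=set0 /\ compact (F x).

Definition usc_map {T : topologicalType} (F : T -> set T) :=
  forall x (U : set T), open U -> F x `<=` U ->
    exists V, [/\ open V, V x & forall y, V y -> F y `<=` U].

Definition lsc_map {T : topologicalType} (F : T -> set T) :=
  forall x (U : set T), open U -> F x `&` U !=set0 ->
    exists V, [/\ open V, V x & forall y, V y -> F y `&` U !=set0].

Definition continuous_map {T : topologicalType} (F : T -> set T) :=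
  usc_map F /\ lsc_map F.

Definition Orb {T : topologicalType} (F : T -> set T) : set {ptws nat -> T} :=
  [set s | forall n, F (s n) (s n.+1)].

Definition pi0 {T : topologicalType} (s : {ptws nat -> T}) : T := s 0%N.

(* Main.v *)
Require Import Defs.
From HB Require Import structures.
From mathcomp Require Import all_boot all_order all_algebra.
From mathcomp Require Import all_classical all_reals all_analysis.
Import Order.TTheory GRing.Theory Num.Theory.
Local Open Scope classical_set_scope.
Local Open Scope ring_scope.

Lemma fin_basis (R : realType) (X : metricType R) (U : set {ptws nat -> X})
  (s : {ptws nat -> X}) : open U -> U s ->
  exists N : nat, exists2 e : R, 0 < e & forall t : {ptws nat -> X},
    (forall i, (i <= N)%N -> mdist (s i) (t i) < e) -> U t.
Proof.
move=> oU Us; apply: contrapT => H.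
have H' : forall N : nat, exists t : {ptws nat -> X},
    (forall i, (i <= N)%N -> mdist (s i) (t i) < N.+1%:R^-1) /\ ~ U t.
  move=> N; apply: contrapT => nE; apply: H; exists N; exists N.+1%:R^-1 => //.
  move=> t Ht; apply: contrapT => nU; apply: nE; by exists t.
have [T HT] := choice H'.
have cT : T @ \oo --> s.
  apply/(@pointwise_cvgP nat X (T @ \oo) s (fmap_filter _ _)) => i.
  change ((fun N => T N i) @ \oo --> s i); apply/metricType_numDomainType.cvgrPdist_lt => e e0.
  near=> N.
  apply: lt_trans; first by apply: (HT N).1; near: N; exact: nbhs_infty_ge.
  by near: N; exact: (near_infty_natSinv_lt (PosNum e0)).
have : \forall N \near \oo, U (T N).
  by apply: cT; rewrite /= -/(nbhs _ _); apply: open_nbhs_nbhs.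
move=> [M _ HM]; exact: (HT M).2 (HM M (leqnn M)).
Unshelve. all: by end_near. Qed.

Lemma chain (R : realType) (X : metricType R) (F : X -> set X)
  (s : nat -> X) (e : R) : 0 < e ->
  (forall x, F x !=set0) -> lsc_map F -> (forall n, F (s n) (s n.+1)) ->
  forall m k, exists2 d : R, 0 < d & forall y, mdist (s k) y < d ->
    exists t : nat -> X, [/\ t 0%N = y, forall n, F (t n) (t n.+1) &
       forall i, (i <= m)%N -> mdist (s (k + i)%N) (t i) < e].
Proof.
move=> e0 Fne lscF Os.
have [g Hg] := choice Fne.
elim=> [|m IH] k.
  exists e => // y hy; exists (fun n => iter n g y); split => //.
  by move=> i; rewrite leqn0 => /eqP ->; rewrite addn0.
have [d' d'0 Hd'] := IH k.+1.
have oI : open (ball (s k.+1) d')° by exact: open_interior.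
have [|V [oV Vs HV]] := lscF (s k) _ oI.
  exists (s k.+1); split; first exact: Os.
  by rewrite /interior /=; exact: nbhsx_ballx.
have : nbhs (s k) V by apply: open_nbhs_nbhs.
rewrite -metricType_numDomainType.filter_from_mdist_nbhs => -[d'' d''0 Hd''].
exists (Num.min d'' e); first by rewrite lt_min d''0 e0.
move=> y; rewrite lt_min => /andP[hy1 hy2].
have [z [Fyz Iz]] := HV y (Hd'' y hy1).
have : ball (s k.+1) d' z by exact: interior_subset.
rewrite ballEmdist /= => hz.
have [t' [t0 Ot' Bt']] := Hd' z hz.
exists (fun n => if n is n'.+1 then t' n' else y); split => //.
  by case=> [|n] /=; [rewrite t0 | exact: Ot'].
case=> [_|i]; first by rewrite addn0.
by rewrite ltnS => hi; rewrite addnS -addSn; exact: Bt'.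
Qed.

Theorem corollary3p3 (R : realType) (X : metricType R)
  (F : X -> set X) :
  compact [set: X] ->
  nonempty_compact_valued F ->
  continuous_map F ->
  forall U : set {ptws nat -> X}, open U -> open (pi0 @` (U `&` Orb F)).
Proof.
move=> _ ncF [_ lscF] U oU; rewrite openE => _ [s [Us Os] <-].
have [N [e e0 HN]] := @fin_basis R X U s oU Us.
have [d d0 Hd] := @chain R X F s e e0 (fun x => (ncF x).1) lscF Os N 0%N.
rewrite /interior /= -metricType_numDomainType.filter_from_mdist_nbhs.
exists d => // y hy.
have [t [t0 Ot Bt]] := Hd y hy.
exists t => //; split => //.
by apply: HN => i hi; have := Bt i hi; rewrite add0n.
Qed.
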